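(* Let $q\in\mathbb H$. The function $s\mapsto\mathcal D S_L^{-1}(s,q)$, defined for $s\in\mathbb H\setminus[q]$, is intrinsic slice hyperholomorphic in $s$.
   Context: $\mathbb H$ denotes the quaternions; $\mathbb S$ is the sphere of unit purely imaginary quaternions; for $q=q_0+\underline q$, $[q]=\{q_0+J|\underline q|:J\in\mathbb S\}$. $S_L^{-1}(s,q):=(s-\bar q)(s^2-2\Re(q)s+|q|^2)^{-1}$ and $\mathcal D=\partial_{q_0}+\sum_{i=1}^3e_i\partial_{q_i}$ acts in the variable $q$. A function $h$ on an axially symmetric open set (with $u+Iv$ containing all $u+Jv$, $J\in\mathbb S$) is intrinsic slice hyperholomorphic if $h(u+Jv)=\alpha(u,v)+J\beta(u,v)$ for all $J\in\mathbb S$ with $\alpha,\beta$ real-valued differentiable, $\alpha(u,-v)=\alpha(u,v)$, $\beta(u,-v)=-\beta(u,v)$, $\partial_u\alpha=\partial_v\beta$, $\partial_v\alpha=-\partial_u\beta$. *)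

(* Defs.v *)
From HB Require Import structures.
From mathcomp Require Import all_boot all_order all_algebra.
From mathcomp Require Import all_classical all_reals all_analysis.
Set Implicit Arguments. Unset Strict Implicit. Unset Printing Implicit Defensive.
Import Order.TTheory GRing.Theory Num.Theory.
Import numFieldNormedType.Exports.
Local Open Scope classical_set_scope.
Local Open Scope ring_scope.

Record quat (R : realType) := Quat { q0 : R; q1 : R; q2 : R; q3 : R }.
Arguments Quat {R}.

Section Quaternions.
Variable R : realType.
Implicit Types p q x : quat R.

Definition qreal (a : R) : quat R := Quat a 0 0 0.
Definition qe1 : quat R := Quat 0 1 0 0.
Definition qe2 : quat R := Quat 0 0 1 0.
Definition qe3 : quat R := Quat 0 0 0 1.
Definition qadd p q : quat R :=
  Quat (q0 p + q0 q) (q1 p + q1 q) (q2 p + q2 q) (q3 p + q3 q).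
Definition qopp p : quat R := Quat (- q0 p) (- q1 p) (- q2 p) (- q3 p).
Definition qsub p q := qadd p (qopp q).
(* Hamilton product, i^2 = j^2 = k^2 = ijk = -1 *)
Definition qmul p q : quat R :=
  Quat (q0 p * q0 q - q1 p * q1 q - q2 p * q2 q - q3 p * q3 q)
       (q0 p * q1 q + q1 p * q0 q + q2 p * q3 q - q3 p * q2 q)
       (q0 p * q2 q - q1 p * q3 q + q2 p * q0 q + q3 p * q1 q)
       (q0 p * q3 q + q1 p * q2 q - q2 p * q1 q + q3 p * q0 q).
Definition qscale (a : R) p : quat R := Quat (a * q0 p) (a * q1 p) (a * q2 p) (a * q3 p).
Definition qconj p : quat R := Quat (q0 p) (- q1 p) (- q2 p) (- q3 p).
Definition qnorm2 p : R := q0 p ^+ 2 + q1 p ^+ 2 + q2 p ^+ 2 + q3 p ^+ 2.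
Definition qnorm p : R := Num.sqrt (qnorm2 p).
Definition qinv p : quat R := qscale (qnorm2 p)^-1 (qconj p).
Definition qRe p : R := q0 p.
Definition qIm p : quat R := Quat 0 (q1 p) (q2 p) (q3 p).

Definition qsphere : set (quat R) := [set J | q0 J = 0 /\ qnorm2 J = 1].

Definition qclass q : set (quat R) :=
  [set x | exists2 J, qsphere J & x = qadd (qreal (qRe q)) (qscale (qnorm (qIm q)) J)].

Definition SLinv (s q : quat R) : quat R :=
  qmul (qsub s (qconj q))
       (qinv (qadd (qsub (qmul s s) (qscale (2 * qRe q) s)) (qreal (qnorm2 q)))).

Definition qbasis (i : nat) : quat R :=
  match i with 0 => qreal 1 | 1 => qe1 | 2 => qe2 | _ => qe3 end.
Definition qpartial (i : nat) (f : quat R -> quat R) (q : quat R) : quat R :=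
  let g := fun t : R => f (qadd q (qscale t (qbasis i))) in
  Quat (derive1 (fun t => q0 (g t)) 0) (derive1 (fun t => q1 (g t)) 0) (derive1 (fun t => q2 (g t)) 0) (derive1 (fun t => q3 (g t)) 0).

Definition qD (f : quat R -> quat R) (q : quat R) : quat R :=
  qadd (qpartial 0 f q)
  (qadd (qmul qe1 (qpartial 1 f q))
  (qadd (qmul qe2 (qpartial 2 f q)) (qmul qe3 (qpartial 3 f q)))).

Definition qopen (U : set (quat R)) : Prop :=
  forall x, U x -> exists2 e : R, 0 < e & forall y, qnorm2 (qsub y x) < e -> U y.

Definition axially_symmetric (U : set (quat R)) : Prop :=
  forall (u v : R) I J, qsphere I -> qsphere J ->
    U (qadd (qreal u) (qscale v I)) -> U (qadd (qreal u) (qscale v J)).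

Definition intrinsic_slice_hyperholomorphic (U : set (quat R))
    (h : quat R -> quat R) : Prop :=
  qopen U /\ axially_symmetric U /\
  exists alpha beta : R -> R -> R,
    forall (u v : R) (J : quat R), qsphere J ->
      U (qadd (qreal u) (qscale v J)) ->
      [/\ h (qadd (qreal u) (qscale v J)) = qadd (qreal (alpha u v)) (qscale (beta u v) J),
          differentiable (fun z : R * R => alpha z.1 z.2) (u, v),
          differentiable (fun z : R * R => beta z.1 z.2) (u, v),
          alpha u (- v) = alpha u v /\ beta u (- v) = - beta u v &
          derive1 (fun a => alpha a v) u = derive1 (fun y => beta u y) v /\
          derive1 (fun y => alpha u y) v = - derive1 (fun a => beta a v) u].

End Quaternions.

(* Main.v *)
Require Import Defs.
From HB Require Import structures.
From mathcomp Require Import all_boot all_order all_algebra.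
From mathcomp Require Import all_classical all_reals all_analysis.
From mathcomp Require Import ring lra.
Set Implicit Arguments. Unset Strict Implicit. Unset Printing Implicit Defensive.
Import Order.TTheory GRing.Theory Num.Theory.
Import numFieldNormedType.Exports.
Local Open Scope classical_set_scope.
Local Open Scope ring_scope.


Lemma dM (R : realType) (f g : R -> R) (x df dg : R) :
  is_derive x (1:R) f df -> is_derive x (1:R) g dg ->
  is_derive x (1:R) (fun t => f t * g t) (f x * dg + g x * df).
Proof. move=> a b; exact: (is_deriveM a b). Qed.
Lemma dD (R : realType) (f g : R -> R) (x df dg : R) :
  is_derive x (1:R) f df -> is_derive x (1:R) g dg ->
  is_derive x (1:R) (fun t => f t + g t) (df + dg).
Proof. move=> a b; exact: (is_deriveD a b). Qed.
Lemma dB (R : realType) (f g : R -> R) (x df dg : R) :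
  is_derive x (1:R) f df -> is_derive x (1:R) g dg ->
  is_derive x (1:R) (fun t => f t - g t) (df - dg).
Proof. move=> a b; exact: (is_deriveB a b). Qed.
Lemma dN (R : realType) (f : R -> R) (x df : R) :
  is_derive x (1:R) f df -> is_derive x (1:R) (fun t => - f t) (- df).
Proof. move=> a; exact: (is_deriveN a). Qed.
Lemma dC (R : realType) (c x : R) : is_derive x (1:R) (fun _ => c) 0.
Proof. exact: is_derive_cst. Qed.
Lemma dI (R : realType) (x : R) : is_derive x (1:R) (fun t => t) 1.
Proof. exact: is_derive_id. Qed.
Lemma dV (R : realType) (f : R -> R) (x df : R) : f x != 0 ->
  is_derive x (1:R) f df -> is_derive x (1:R) (fun t => (f t)^-1) (- (f x) ^- 2 * df).
Proof.
move=> fx0 a; have da : derivable f x 1 by case: a.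
apply: DeriveDef; first exact: derivableV.
by rewrite deriveV // derive_val.
Qed.
Lemma dX2 (R : realType) (f : R -> R) (x df : R) :
  is_derive x (1:R) f df -> is_derive x (1:R) (fun t => f t ^+ 2) (2 * f x * df).
Proof.
move=> a; rewrite (_ : (fun t => f t ^+ 2) = (fun t => f t * f t)); last first.
  by apply/funext => t; rewrite expr2.
apply: is_derive_eq. change (f x * df + f x * df = 2 * f x * df). ring. Qed.

Definition qder (R : realType) (X : R -> quat R) (x : R) (D : quat R) : Prop :=
  [/\ is_derive x (1:R) (fun t => q0 (X t)) (q0 D),
      is_derive x (1:R) (fun t => q1 (X t)) (q1 D),
      is_derive x (1:R) (fun t => q2 (X t)) (q2 D) &
      is_derive x (1:R) (fun t => q3 (X t)) (q3 D)].

Lemma scR (R : realType) (a b : R) : a *: b = a * b.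
Proof. by []. Qed.

Ltac qdsolve := split; (apply: is_derive_eq; rewrite /= ?scR; ring).

Lemma qder_cst (R : realType) (c : quat R) (x : R) :
  qder (fun _ => c) x (Quat 0 0 0 0).
Proof. split; exact: is_derive_cst. Qed.

Lemma qder_lin (R : realType) (a b : quat R) (x : R) :
  qder (fun t => qadd a (qscale t b)) x b.
Proof. rewrite /qder /qadd /qscale /=; qdsolve. Qed.

Lemma qder_add (R : realType) X Y (x : R) DX DY : qder X x DX -> qder Y x DY ->
  qder (fun t => qadd (X t) (Y t)) x (qadd DX DY).
Proof. case=> ? ? ? ? [] ? ? ? ?; rewrite /qder /qadd /=; qdsolve. Qed.

Lemma qder_sub (R : realType) X Y (x : R) DX DY : qder X x DX -> qder Y x DY ->
  qder (fun t => qsub (X t) (Y t)) x (qsub DX DY).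
Proof. case=> ? ? ? ? [] ? ? ? ?; rewrite /qder /qsub /qadd /qopp /=; qdsolve. Qed.

Lemma qder_conj (R : realType) X (x : R) DX : qder X x DX ->
  qder (fun t => qconj (X t)) x (qconj DX).
Proof. case=> ? ? ? ?; rewrite /qder /qconj /=; qdsolve. Qed.

Lemma qder_mul (R : realType) X Y (x : R) DX DY : qder X x DX -> qder Y x DY ->
  qder (fun t => qmul (X t) (Y t)) x (qadd (qmul DX (Y x)) (qmul (X x) DY)).
Proof. case=> ? ? ? ? [] ? ? ? ?; rewrite /qder /qmul /qadd /=; qdsolve. Qed.

Lemma qder_scale (R : realType) (f : R -> R) X (x df : R) DX :
  is_derive x (1:R) f df -> qder X x DX ->
  qder (fun t => qscale (f t) (X t)) x (qadd (qscale (f x) DX) (qscale df (X x))).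
Proof. move=> ? [] ? ? ? ?; rewrite /qder /qscale /qadd /=; qdsolve. Qed.

Lemma qder_real (R : realType) (f : R -> R) (x df : R) :
  is_derive x (1:R) f df -> qder (fun t => qreal (f t)) x (qreal df).
Proof. move=> ?; rewrite /qder /qreal /=; qdsolve. Qed.

Lemma der_norm2 (R : realType) X (x : R) DX : qder X x DX ->
  is_derive x (1:R) (fun t => qnorm2 (X t))
    (2 * (q0 (X x) * q0 DX + q1 (X x) * q1 DX + q2 (X x) * q2 DX + q3 (X x) * q3 DX)).
Proof.
case=> ? ? ? ?; rewrite /qnorm2.
rewrite (_ : (fun t => _) = (fun t => q0 (X t) * q0 (X t) + q1 (X t) * q1 (X t)
   + q2 (X t) * q2 (X t) + q3 (X t) * q3 (X t))); last first.
  by apply/funext => t; rewrite !expr2.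
apply: is_derive_eq; rewrite /= ?scR; ring.
Qed.

Definition dnorm2 (R : realType) (X DX : quat R) : R :=
  2 * (q0 X * q0 DX + q1 X * q1 DX + q2 X * q2 DX + q3 X * q3 DX).

Lemma qder_inv (R : realType) X (x : R) DX : qder X x DX -> qnorm2 (X x) != 0 ->
  qder (fun t => qinv (X t)) x
    (qadd (qscale (qnorm2 (X x))^-1 (qconj DX))
          (qscale (- (qnorm2 (X x)) ^- 2 * dnorm2 (X x) DX) (qconj (X x)))).
Proof.
move=> dX n0; rewrite /qinv.
apply: qder_scale; last exact: qder_conj.
exact: (@dV R (fun t => qnorm2 (X t)) _ _ n0 (der_norm2 dX)).
Qed.

Definition Qf (R : realType) (s q : quat R) : quat R :=
  qadd (qsub (qmul s s) (qscale (2 * qRe q) s)) (qreal (qnorm2 q)).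

Lemma der_partial (R : realType) (f : R -> quat R) (D : quat R) :
  qder f 0 D ->
  Quat (derive1 (fun t => q0 (f t)) 0) (derive1 (fun t => q1 (f t)) 0)
       (derive1 (fun t => q2 (f t)) 0) (derive1 (fun t => q3 (f t)) 0) = D.
Proof.
case=> a b c d; rewrite !derive1E !derive_val; clear a b c d; by case: D.
Qed.

Lemma qadd0s (R : realType) (q b : quat R) : qadd q (qscale 0 b) = q.
Proof. case: q => *; rewrite /qadd /qscale /= !mul0r !addr0 //. Qed.

Lemma qpartialE (R : realType) (s q : quat R) i : qnorm2 (Qf s q) != 0 ->
  qpartial i (SLinv s) q =
  qadd (qmul (qsub (Quat 0 0 0 0) (qconj (qbasis R i))) (qinv (Qf s q)))
       (qmul (qsub s (qconj q))
          (qadd (qscale (qnorm2 (Qf s q))^-1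
                  (qconj (qadd (qsub (Quat 0 0 0 0)
                     (qadd (qscale (2 * qRe q) (Quat 0 0 0 0)) (qscale (2 * q0 (qbasis R i)) s)))
                     (qreal (dnorm2 q (qbasis R i))))))
                (qscale (- (qnorm2 (Qf s q)) ^- 2 *
                   dnorm2 (Qf s q) (qadd (qsub (Quat 0 0 0 0)
                     (qadd (qscale (2 * qRe q) (Quat 0 0 0 0)) (qscale (2 * q0 (qbasis R i)) s)))
                     (qreal (dnorm2 q (qbasis R i)))))
                   (qconj (Qf s q))))).
Proof.
move=> n0; rewrite /qpartial; apply: der_partial.
set b := qbasis R i.
have dX := qder_lin q b (0:R).
have dS := qder_sub (qder_cst s 0) (qder_conj dX).
have dre : is_derive (0:R) (1:R) (fun t => 2 * qRe (qadd q (qscale t b))) (2 * q0 b).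
  rewrite /qRe /qadd /qscale /=; apply: is_derive_eq; rewrite /= ?scR; ring.
have dQ := qder_add (qder_sub (qder_cst (qmul s s) 0) (qder_scale dre (qder_cst s 0)))
             (qder_real (der_norm2 dX)).
have := qder_mul dS (qder_inv dQ _).
rewrite !qadd0s. move=> /(_ n0) h. exact: h.
Qed.




Lemma quat_eq (R : realType) (x y : quat R) :
  q0 x = q0 y -> q1 x = q1 y -> q2 x = q2 y -> q3 x = q3 y -> x = y.
Proof. by case: x; case: y => /= ? ? ? ? ? ? ? ? -> -> -> ->. Qed.

Lemma qD_SLinv (R : realType) (s q : quat R) : qnorm2 (Qf s q) != 0 ->
  qD (SLinv s) q = qscale (-2) (qinv (Qf s q)).
Proof.
move=> n0; rewrite /qD !qpartialE //.
move: n0; case: s => s0 s1 s2 s3; case: q => a0 a1 a2 a3.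
cbv beta iota delta [qinv Qf qIm qnorm2 dnorm2 qbasis qadd qsub qmul qscale qconj qopp qreal qRe qe1 qe2 qe3 q0 q1 q2 q3].
move=> n0.
rewrite !addr0 in n0.
congr Quat; field; exact: n0.
Qed.



Definition r2 (R : realType) (q : quat R) : R := qnorm2 (qIm q).
Definition Af (R : realType) (q : quat R) (u v : R) : R := (u - q0 q)^+2 - v^+2 + r2 q.
Definition Bf (R : realType) (q : quat R) (u v : R) : R := 2 * (u - q0 q) * v.
Definition Nf (R : realType) (q : quat R) (u v : R) : R := Af q u v ^+ 2 + Bf q u v ^+ 2.
Definition alpha (R : realType) (q : quat R) (u v : R) : R := -2 * Af q u v * (Nf q u v)^-1.
Definition beta (R : realType) (q : quat R) (u v : R) : R := 2 * Bf q u v * (Nf q u v)^-1.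

Lemma sphereP (R : realType) (J : quat R) : qsphere J ->
  q0 J = 0 /\ q1 J ^+ 2 + q2 J ^+ 2 + q3 J ^+ 2 = 1.
Proof.
case=> h0 h1; split => //; move: h1; rewrite /qnorm2 h0 expr0n /= add0r //.
Qed.

Lemma QfJ (R : realType) (q J : quat R) (u v : R) : q0 J = 0 ->
  Qf (qadd (qreal u) (qscale v J)) q =
  Quat ((u - q0 q)^+2 - v^+2 * (q1 J ^+ 2 + q2 J ^+ 2 + q3 J ^+ 2) + r2 q)
       (Bf q u v * q1 J) (Bf q u v * q2 J) (Bf q u v * q3 J).
Proof.
case: J => j0 j1 j2 j3 /= ->; case: q => a0 a1 a2 a3.
cbv beta iota delta [r2 Bf Qf qIm qnorm2 qadd qsub qmul qscale qconj qopp qreal qRe q0 q1 q2 q3].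
congr Quat; ring.
Qed.

Lemma NfJ (R : realType) (q J : quat R) (u v : R) : qsphere J ->
  qnorm2 (Qf (qadd (qreal u) (qscale v J)) q) = Nf q u v.
Proof.
move=> /sphereP [h0 h1]; rewrite QfJ // h1 mulr1 /Nf /Af.
rewrite /qnorm2 /=.
transitivity (((u - q0 q) ^+ 2 - v ^+ 2 + r2 q) ^+ 2 + Bf q u v ^+ 2 * (q1 J ^+ 2 + q2 J ^+ 2 + q3 J ^+ 2)).
  ring.
by rewrite h1 mulr1.
Qed.

Lemma h_formula (R : realType) (q J : quat R) (u v : R) : qsphere J -> Nf q u v != 0 ->
  qD (SLinv (qadd (qreal u) (qscale v J))) q = qadd (qreal (alpha q u v)) (qscale (beta q u v) J).
Proof.
move=> hs n0; have n0' := n0; rewrite -(NfJ q u v hs) in n0'.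
rewrite qD_SLinv //; clear n0'.
move: (hs) => /sphereP [h0 h1].
rewrite /qinv NfJ // QfJ // h1 mulr1.
rewrite /alpha /beta /Af; set N := Nf q u v.
case: J hs h0 h1 => j0 j1 j2 j3 /= _ -> _.
cbv beta iota delta [qadd qscale qconj qreal q0 q1 q2 q3].
congr Quat; ring.
Qed.



Lemma r2_ge0 (R : realType) (q : quat R) : 0 <= r2 q.
Proof. rewrite /r2 /qnorm2 /=; by rewrite !addr_ge0 // sqr_ge0. Qed.

Lemma class_iff (R : realType) (q x : quat R) :
  qclass q x <-> (q0 x = q0 q /\ qnorm2 (qIm x) = r2 q).
Proof.
split.
  case=> J /sphereP [h0 h1] ->; rewrite /qnorm /= h0 mulr0 addr0; split => //.
  rewrite /qnorm2 /= -/(r2 q).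
  transitivity (Num.sqrt (r2 q) ^+ 2 * (q1 J ^+ 2 + q2 J ^+ 2 + q3 J ^+ 2) + 0 ^+ 2).
    rewrite /r2; ring.
  by rewrite h1 mulr1 sqr_sqrtr ?r2_ge0 // expr0n addr0.
case: x => x0 x1 x2 x3 /= [-> hn].
have hr := r2_ge0 q.
rewrite /qnorm2 /= expr0n add0r in hn.
have [c0|cn0] := eqVneq (Num.sqrt (r2 q)) 0.
  have r0 : r2 q = 0.
    by rewrite -(sqr_sqrtr hr) c0 expr0n.
  have e1 : x1 = 0 by nra.
  have e2 : x2 = 0 by nra.
  have e3 : x3 = 0 by nra.
  exists (qe1 R).
    rewrite /qsphere /qnorm2 /=; split => //; ring.
  rewrite /qnorm c0 e1 e2 e3 /qadd /qscale /qreal /qRe /=.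
  congr Quat; ring.
set c := Num.sqrt (r2 q) in cn0 *.
have cc : c ^+ 2 = r2 q by rewrite sqr_sqrtr.
exists (Quat 0 (x1 / c) (x2 / c) (x3 / c)).
  split => //; rewrite /qnorm2 /=.
  transitivity ((x1 ^+ 2 + x2 ^+ 2 + x3 ^+ 2) / c ^+ 2).
    by field.
  by rewrite hn cc divff // -cc expf_neq0.
rewrite /qnorm -/c /qadd /qscale /qreal /qRe /=.
by congr Quat; field.
Qed.



Lemma classJ (R : realType) (q J : quat R) (u v : R) : qsphere J ->
  (qclass q (qadd (qreal u) (qscale v J)) <-> (u = q0 q /\ v ^+ 2 = r2 q)).
Proof.
move=> /sphereP [h0 h1]; rewrite class_iff.
have -> : q0 (qadd (qreal u) (qscale v J)) = u by rewrite /= h0 mulr0 addr0.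
have -> : qnorm2 (qIm (qadd (qreal u) (qscale v J))) = v ^+ 2.
  rewrite /qnorm2 /=.
  transitivity (v ^+ 2 * (q1 J ^+ 2 + q2 J ^+ 2 + q3 J ^+ 2)); first ring.
  by rewrite h1 mulr1.
by [].
Qed.

Lemma sq0 (R : realType) (a b : R) : a ^+ 2 + b ^+ 2 = 0 -> a = 0 /\ b = 0.
Proof.
move/eqP; rewrite paddr_eq0 ?sqr_ge0 // !sqrf_eq0 => /andP [/eqP -> /eqP ->] //.
Qed.

Lemma Nf_ne0 (R : realType) (q J : quat R) (u v : R) : qsphere J ->
  ~ qclass q (qadd (qreal u) (qscale v J)) -> Nf q u v != 0.
Proof.
move=> hs hc; apply/negP => /eqP hN; apply: hc; apply/(classJ _ _ _ hs).
have hr := r2_ge0 q.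
move: hN; rewrite /Nf /Af /Bf => hN.
have [hA hB] := sq0 hN.
have [hv|hv] := eqVneq v 0.
  have h2 : (u - q0 q) ^+ 2 + r2 q = 0 by rewrite -hA hv; ring.
  move/eqP: h2; rewrite paddr_eq0 ?sqr_ge0 // sqrf_eq0 => /andP [/eqP hu /eqP ->].
  split; last by rewrite hv expr0n.
  by apply/eqP; rewrite -subr_eq0 hu.
have hu : u - q0 q = 0.
  by move/eqP: hB; rewrite !mulf_eq0 (negbTE hv) orbF pnatr_eq0 /= => /eqP.
split; first by apply/eqP; rewrite -subr_eq0 hu.
by move: hA; rewrite hu expr0n /= add0r => hA; lra.
Qed.

Lemma axial (R : realType) (q : quat R) : axially_symmetric (~` qclass q).
Proof.
move=> u v I J hI hJ hc hc'; apply: hc.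
by apply/(classJ _ _ _ hI); apply/(classJ _ _ _ hJ).
Qed.

Lemma tri3 (R : realType) (a1 a2 a3 y1 y2 y3 : R) :
  (Num.sqrt (a1 ^+ 2 + a2 ^+ 2 + a3 ^+ 2) - Num.sqrt (y1 ^+ 2 + y2 ^+ 2 + y3 ^+ 2)) ^+ 2
  <= (y1 - a1) ^+ 2 + (y2 - a2) ^+ 2 + (y3 - a3) ^+ 2.
Proof.
have ha : 0 <= a1 ^+ 2 + a2 ^+ 2 + a3 ^+ 2 by rewrite !addr_ge0 // sqr_ge0.
have hy : 0 <= y1 ^+ 2 + y2 ^+ 2 + y3 ^+ 2 by rewrite !addr_ge0 // sqr_ge0.
set A := Num.sqrt _; set Y := Num.sqrt _.
have hA : A ^+ 2 = a1 ^+ 2 + a2 ^+ 2 + a3 ^+ 2 by rewrite sqr_sqrtr.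
have hY : Y ^+ 2 = y1 ^+ 2 + y2 ^+ 2 + y3 ^+ 2 by rewrite sqr_sqrtr.
have A0 : 0 <= A by rewrite sqrtr_ge0.
have Y0 : 0 <= Y by rewrite sqrtr_ge0.
have cs : (a1 * y1 + a2 * y2 + a3 * y3) ^+ 2 <= (A * Y) ^+ 2.
  rewrite exprMn hA hY -subr_ge0.
  have -> : (a1 ^+ 2 + a2 ^+ 2 + a3 ^+ 2) * (y1 ^+ 2 + y2 ^+ 2 + y3 ^+ 2) -
     (a1 * y1 + a2 * y2 + a3 * y3) ^+ 2 =
     (a1 * y2 - a2 * y1) ^+ 2 + (a1 * y3 - a3 * y1) ^+ 2 + (a2 * y3 - a3 * y2) ^+ 2 by ring.
  by rewrite !addr_ge0 // sqr_ge0.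
have AY0 : 0 <= A * Y by rewrite mulr_ge0.
have dot : a1 * y1 + a2 * y2 + a3 * y3 <= A * Y.
  have [//|lt] := leP (a1 * y1 + a2 * y2 + a3 * y3) (A * Y).
  exfalso; nra.
have -> : (A - Y) ^+ 2 = A ^+ 2 + Y ^+ 2 - 2 * (A * Y) by ring.
rewrite hA hY; nra.
Qed.

Lemma r2E (R : realType) (q : quat R) : r2 q = q1 q ^+ 2 + q2 q ^+ 2 + q3 q ^+ 2.
Proof. by rewrite /r2 /qnorm2 /= expr0n add0r. Qed.

Lemma open_compl (R : realType) (q : quat R) : qopen (~` qclass q).
Proof.
move=> x hx.
set Ra := Num.sqrt (q1 x ^+ 2 + q2 x ^+ 2 + q3 x ^+ 2).
set c := Num.sqrt (q1 q ^+ 2 + q2 q ^+ 2 + q3 q ^+ 2).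
have hx2 : 0 <= q1 x ^+ 2 + q2 x ^+ 2 + q3 x ^+ 2 by rewrite !addr_ge0 // sqr_ge0.
have hq2 : 0 <= q1 q ^+ 2 + q2 q ^+ 2 + q3 q ^+ 2 by rewrite !addr_ge0 // sqr_ge0.
exists ((q0 x - q0 q) ^+ 2 + (Ra - c) ^+ 2).
  rewrite lt_def addr_ge0 ?sqr_ge0 // andbT; apply/eqP => /sq0 [h1 h2].
  apply: hx; apply/class_iff; split.
    by apply/eqP; rewrite -subr_eq0 h1.
  rewrite r2E /qnorm2 /= expr0n add0r.
  rewrite -(sqr_sqrtr hx2) -(sqr_sqrtr hq2) -/Ra -/c.
  by have -> : Ra = c by apply/eqP; rewrite -subr_eq0 h2.
move=> y hy hcy.
move/class_iff: hcy => [hy0 hyn].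
rewrite r2E /qnorm2 /= expr0n add0r in hyn.
have := tri3 (q1 x) (q2 x) (q3 x) (q1 y) (q2 y) (q3 y).
rewrite hyn -/Ra -/c => ht.
move: hy; rewrite /qnorm2 /qsub /qadd /qopp /= hy0 => hy.
have e1 : (q0 q + - q0 x) ^+ 2 = (q0 x - q0 q) ^+ 2 by ring.
rewrite e1 in hy.
have e2 : (q1 y + - q1 x) ^+ 2 + (q2 y + - q2 x) ^+ 2 + (q3 y + - q3 x) ^+ 2 =
  (q1 y - q1 x) ^+ 2 + (q2 y - q2 x) ^+ 2 + (q3 y - q3 x) ^+ 2 by [].
lra.
Qed.



Lemma dffst (R : realType) (p : R * R) : differentiable (fun z : R * R => z.1) p.
Proof.
apply: (@linear_differentiable _ _ _ (fst : {linear (R * R)%type -> R})).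
by move=> [a b]; exact: cvg_fst.
Qed.
Lemma dfsnd (R : realType) (p : R * R) : differentiable (fun z : R * R => z.2) p.
Proof.
apply: (@linear_differentiable _ _ _ (snd : {linear (R * R)%type -> R})).
by move=> [a b]; exact: cvg_snd.
Qed.
Lemma dfM (R : realType) (f g : R * R -> R) (p : R * R) :
  differentiable f p -> differentiable g p -> differentiable (fun z => f z * g z) p.
Proof. move=> a b; exact: (differentiableM a b). Qed.
Lemma dfD (R : realType) (f g : R * R -> R) (p : R * R) :
  differentiable f p -> differentiable g p -> differentiable (fun z => f z + g z) p.
Proof. move=> a b; exact: (differentiableD a b). Qed.
Lemma dfB (R : realType) (f g : R * R -> R) (p : R * R) :
  differentiable f p -> differentiable g p -> differentiable (fun z => f z - g z) p.
Proof. move=> a b; exact: (differentiableB a b). Qed.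
Lemma dfC (R : realType) (c : R) (p : R * R) : differentiable (fun _ : R * R => c) p.
Proof. exact: differentiable_cst. Qed.
Lemma dfX2 (R : realType) (f : R * R -> R) (p : R * R) :
  differentiable f p -> differentiable (fun z => f z ^+ 2) p.
Proof.
move=> a; rewrite (_ : (fun z => f z ^+ 2) = (fun z => f z * f z)); last first.
  by apply/funext => z; rewrite expr2.
exact: dfM.
Qed.
Lemma dfV (R : realType) (f : R * R -> R) (p : R * R) : f p != 0 ->
  differentiable f p -> differentiable (fun z => (f z)^-1) p.
Proof. move=> h a; exact: (differentiableV a h). Qed.

Lemma dfNeg (R : realType) (f : R * R -> R) (p : R * R) :
  differentiable f p -> differentiable (fun z => - f z) p.
Proof. move=> a; exact: (differentiableN a). Qed.

Ltac dftac := repeat first [apply: dfX2 | apply: dfM | apply: dfD | apply: dfB | apply: dfNeg |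
  apply: dffst | apply: dfsnd | apply: dfC].

Lemma dfN (R : realType) (q : quat R) (u v : R) :
  differentiable (fun z : R * R => Nf q z.1 z.2) (u, v).
Proof. rewrite /Nf /Af /Bf; dftac. Qed.

Lemma diff_alpha (R : realType) (q : quat R) (u v : R) : Nf q u v != 0 ->
  differentiable (fun z : R * R => alpha q z.1 z.2) (u, v).
Proof.
move=> n0; rewrite /alpha; apply: dfM; first by rewrite /Af; dftac.
by apply: dfV => //; exact: dfN.
Qed.

Lemma diff_beta (R : realType) (q : quat R) (u v : R) : Nf q u v != 0 ->
  differentiable (fun z : R * R => beta q z.1 z.2) (u, v).
Proof.
move=> n0; rewrite /beta; apply: dfM; first by rewrite /Bf; dftac.
by apply: dfV => //; exact: dfN.
Qed.

Lemma sym_ab (R : realType) (q : quat R) (u v : R) :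
  alpha q u (- v) = alpha q u v /\ beta q u (- v) = - beta q u v.
Proof.
rewrite /alpha /beta /Nf /Af /Bf !sqrrN mulrN sqrrN; split => //.
ring.
Qed.



Lemma CR (R : realType) (q : quat R) (u v : R) : Nf q u v != 0 ->
  derive1 (fun a => alpha q a v) u = derive1 (fun y => beta q u y) v /\
  derive1 (fun y => alpha q u y) v = - derive1 (fun a => beta q a v) u.
Proof.
move=> n0.
have dAu : is_derive u (1:R) (fun a => Af q a v) (2 * (u - q0 q)).
  by rewrite /Af; apply: is_derive_eq; rewrite /= ?scR; ring.
have dAv : is_derive v (1:R) (fun y => Af q u y) (- 2 * v).
  by rewrite /Af; apply: is_derive_eq; rewrite /= ?scR; ring.
have dBu : is_derive u (1:R) (fun a => Bf q a v) (2 * v).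
  by rewrite /Bf; apply: is_derive_eq; rewrite /= ?scR; ring.
have dBv : is_derive v (1:R) (fun y => Bf q u y) (2 * (u - q0 q)).
  by rewrite /Bf; apply: is_derive_eq; rewrite /= ?scR; ring.
have dNu : is_derive u (1:R) (fun a => Nf q a v)
   (2 * Af q u v * (2 * (u - q0 q)) + 2 * Bf q u v * (2 * v)).
  exact: dD (dX2 dAu) (dX2 dBu).
have dNv : is_derive v (1:R) (fun y => Nf q u y)
   (2 * Af q u v * (- 2 * v) + 2 * Bf q u v * (2 * (u - q0 q))).
  exact: dD (dX2 dAv) (dX2 dBv).
have h1 := dM (dM (dC (-2) u) dAu) (@dV R (fun a => Nf q a v) u _ n0 dNu).
have h2 := dM (dM (dC (-2) v) dAv) (@dV R (fun y => Nf q u y) v _ n0 dNv).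
have h3 := dM (dM (dC 2 u) dBu) (@dV R (fun a => Nf q a v) u _ n0 dNu).
have h4 := dM (dM (dC 2 v) dBv) (@dV R (fun y => Nf q u y) v _ n0 dNv).
rewrite !derive1E /alpha /beta (derive_val (is_derive := h1)) (derive_val (is_derive := h2)) (derive_val (is_derive := h3)) (derive_val (is_derive := h4)).
move: n0; rewrite /Nf /Af /Bf => n0.
by split; field; exact: n0.
Qed.


Theorem proposition4p10 (R : realType) (q : quat R) :
  intrinsic_slice_hyperholomorphic (~` qclass q) (fun s => qD (SLinv s) q).
Proof.
split; first exact: open_compl.
split; first exact: axial.
exists (alpha q), (beta q) => u v J hs hU.
have n0 := Nf_ne0 hs hU.
split.
- exact: h_formula.
- exact: diff_alpha.
- exact: diff_beta.
- exact: sym_ab.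
- exact: CR.
Qed.
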